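(* Let $d\ge 1$, $r\in(0,+\infty)$, let $\|\cdot\|$ be a norm on $\mathbb{R}^d$ and let $P$ be a Borel probability measure on $\mathbb{R}^d$ with $\int\|x\|^r\,dP(x)<+\infty$. Let $(a_n)_{n\ge1}$ be an $L^r$-optimal greedy quantization sequence for $P$ and $a^{(n)}=\{a_1,\dots,a_n\}$. Then, for every probability distribution $\nu$ on $(\mathbb{R}^d,\mathcal{B}(\mathbb{R}^d))$, every $c\in(0,\tfrac12)$ and every $n\ge1$, $$e_r(a^{(n)},P)^r-e_r(a^{(n+1)},P)^r\ \ge\ \frac{(1-c)^r-c^r}{(c+1)^r}\int \nu\Big(B\Big(x,\tfrac{c}{c+1}\,d(x,a^{(n)})\Big)\Big)\,d(x,a^{(n)})^r\,dP(x).$$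
   Context: For a finite nonempty set $\Gamma\subset\mathbb{R}^d$ and $x\in\mathbb{R}^d$, $d(x,\Gamma)=\min_{a\in\Gamma}\|x-a\|$ and $e_r(\Gamma,P)=\big(\int d(x,\Gamma)^r\,dP(x)\big)^{1/r}$. An $L^r$-optimal greedy quantization sequence for $P$ is a sequence $(a_n)_{n\ge1}$ in $\mathbb{R}^d$ such that, with $a^{(0)}=\varnothing$ and $a^{(n)}=\{a_1,\dots,a_n\}$, for every $n\ge0$, $a_{n+1}\in\operatorname{argmin}_{\xi\in\mathbb{R}^d} e_r(a^{(n)}\cup\{\xi\},P)$ (so $a_1$ is an $L^r$-median of $P$, i.e. a minimizer of $\xi\mapsto e_r(\{\xi\},P)$). $B(x,t)=\{y\in\mathbb{R}^d:\|y-x\|\le t\}$. *)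

(* Defs.v *)
From HB Require Import structures.
From mathcomp Require Import all_boot all_order all_algebra.
From mathcomp Require Import all_classical all_reals all_analysis.
Set Implicit Arguments. Unset Strict Implicit. Unset Printing Implicit Defensive.
Import Order.TTheory GRing.Theory Num.Theory.
Import numFieldNormedType.Exports.
Local Open Scope classical_set_scope.
Local Open Scope ring_scope.

(* R^d is (matrix R 1 d); its Borel sigma-algebra is the sigma-algebra generated by
   the open sets of the standard (product) topology on (matrix R 1 d). *)
Definition borel_sets (R : realType) (d : nat) : set (set (matrix R 1 d)) := open.
Definition Rd (R : realType) (d : nat) := g_sigma_algebraType (@borel_sets R d).

Definition is_norm (R : realType) (d : nat) (N : (matrix R 1 d) -> R) : Prop :=
  [/\ forall x, N x = 0 -> x = 0,
      forall (a : R) x, N (a *: x) = `|a| * N x &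
      forall x y, N (x + y) <= N x + N y].

Definition Nball (R : realType) (d : nat) (N : (matrix R 1 d) -> R) (x : (matrix R 1 d)) (t : R)
  : set (matrix R 1 d) := [set y | N (y - x) <= t].

(* d(x, Gamma) for a finite set Gamma given by a list (min over the list;
   +oo for the empty list, which never occurs below). *)
Definition distG (R : realType) (d : nat) (N : (matrix R 1 d) -> R)
  (G : seq (matrix R 1 d)) (x : (matrix R 1 d)) : \bar R :=
  \big[mine/+oo%E]_(g <- G) (N (x - g))%:E.

Definition err (R : realType) (d : nat) (N : (matrix R 1 d) -> R) (r : R)
  (P : probability (Rd R d) R) (G : seq (matrix R 1 d)) : \bar R :=
  ((\int[P]_x (distG N G x `^ r)%E) `^ r^-1)%E.

(* a^(n) = {a_1,...,a_n}; the Rocq sequence is 0-indexed: a 0 = a_1, ... *)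
Definition pts (R : realType) (d : nat) (a : nat -> (matrix R 1 d)) (n : nat)
  : seq (matrix R 1 d) := [seq a k | k <- iota 0 n].

Definition greedy_seq (R : realType) (d : nat) (N : (matrix R 1 d) -> R) (r : R)
  (P : probability (Rd R d) R) (a : nat -> (matrix R 1 d)) : Prop :=
  forall (n : nat) (xi : (matrix R 1 d)),
    (err N r P (rcons (pts a n) (a n)) <= err N r P (rcons (pts a n) xi))%E.

(* Main.v *)
Require Import Defs.
From HB Require Import structures.
From mathcomp Require Import all_boot all_order all_algebra.
From mathcomp Require Import all_classical all_reals all_analysis.
From mathcomp Require Import measurable_realfun.
From mathcomp Require Import lra.
Import Order.TTheory GRing.Theory Num.Theory.
Import numFieldNormedType.Exports.
Local Open Scope classical_set_scope.
Local Open Scope ring_scope.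
Set Implicit Arguments. Unset Strict Implicit.
Lemma meas_exists dd (X : measurableType dd) (I : countType) (F : I -> set X) :
  (forall i, measurable (F i)) -> measurable [set x | exists i, F i x].
Proof.
move=> mF.
have -> : [set x | exists i, F i x] =
  \bigcup_(k in setT) (fun k => if @pickle_inv I k is Some i then F i else set0) k.
  apply/seteqP; split => x.
  - by move=> [i Fi]; exists (pickle i) => //=; rewrite pickleK_inv.
  - by move=> [k _]; case: (pickle_inv k) => // i Fi; exists i.
by apply: bigcupT_measurable => k; case: (pickle_inv k).
Qed.

Lemma meas_forall dd (X : measurableType dd) (I : countType) (F : I -> set X) :
  (forall i, measurable (F i)) -> measurable [set x | forall i, F i x].
Proof.
move=> mF.
have -> : [set x | forall i, F i x] =
  \bigcap_(k in setT) (fun k => if @pickle_inv I k is Some i then F i else setT) k.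
  apply/seteqP; split => x.
  - by move=> H k _ /=; case: (pickle_inv k).
  - by move=> H i; have := H (pickle i) Logic.I; rewrite /= pickleK_inv.
by apply: bigcapT_measurable => k; case: (pickle_inv k).
Qed.

Section Meas.
Variables (R : realType) (d : nat).
Local Notation V := (matrix R 1 d).
Local Notation T := (Rd R d).

Lemma cont_meas (f : V -> R) : continuous f -> measurable_fun [set: T] f.
Proof.
move=> /continuousP cf.
apply: (measurability _ (RGenOpens.measurableE R)).
move=> _ [_ [a [b ->]] <-].
apply: sub_sigma_algebra; rewrite setTI; apply: cf; exact: interval_open.
Qed.

Definition hsub (z : T * T) : T := (z.1 : V) - (z.2 : V).

Lemma meas_hsub : measurable_fun [set: T * T] hsub.
Proof.
apply: (@measurability _ _ _ T [set: T * T] hsub (@borel_sets R d) erefl).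
move=> _ [U oU <-]; rewrite setTI.
have mc : forall i j, measurable_fun [set: T * T] (fun z : T * T => (hsub z : V) i j).
  move=> i j; rewrite /hsub.
  have -> : (fun z : T * T => ((z.1 : V) - (z.2 : V)) i j) =
      (fun z : T * T => (z.1 : V) i j - (z.2 : V) i j).
    by apply/funext => z; rewrite !mxE.
  have mij : measurable_fun [set: T] (fun x : T => (x : V) i j).
    apply: cont_meas. exact: (@coord_continuous R 1 d i j).
  apply: measurable_funB.
  - exact: (measurableT_comp mij measurable_fst).
  - exact: (measurableT_comp mij measurable_snd).
have mball : forall (Q : V) e, measurable (hsub @^-1` ball Q e).
  move=> Q e; case: (ltP 0 e) => e0; last first.
    rewrite (_ : _ @^-1` _ = set0) //; apply/seteqP; split => // z [] /=.
    by move=> /lt_le_trans /(_ e0); rewrite ltxx.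
  have -> : hsub @^-1` ball Q e = [set z | forall ij : 'I_1 * 'I_d,
      (fun ij z => ball (Q ij.1 ij.2) e ((hsub z : V) ij.1 ij.2)) ij z].
    apply/seteqP; split => z /=.
    - by move=> [_ H] [i j]; exact: H.
    - by move=> H; split => // i j; exact: (H (i, j)).
  apply: meas_forall => -[i j] /=.
  have := mc i j measurableT (ball (Q i j) e) (open_measurable (ball_open (Q i j) e)).
  by rewrite setTI.
have -> : hsub @^-1` U = [set z | exists p : 'M[rat]_(1, d) * rat,
    (fun p z => ball (map_mx ratr p.1 : V) (ratr p.2) `<=` U /\
       ball (map_mx ratr p.1 : V) (ratr p.2) (hsub z)) p z].
  apply/seteqP; split => z /=; last by move=> [p [sU bz]]; apply: sU.
  move=> Uz.
  have : nbhs (hsub z : V) U by apply: open_nbhs_nbhs; split.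
  move=> /nbhs_ballP [e e0 sU].
  have [q] : exists q : rat, ratr q \in `]0, e / 2[ by apply: rat_in_itvoo; rewrite divr_gt0.
  rewrite in_itv /= => /andP[q0 qe].
  have : forall ij : 'I_1 * 'I_d, exists r : rat,
      ball ((hsub z : V) ij.1 ij.2) (ratr q) (ratr r).
    move=> ij; have [r] := @rat_in_itvoo R ((hsub z : V) ij.1 ij.2 - ratr q)
      ((hsub z : V) ij.1 ij.2 + ratr q) ltac:(by rewrite ltrBlDr -addrA ltrDl addr_gt0).
    rewrite in_itv /= => hr; exists r; rewrite /ball /= ltr_distlC; exact: hr.
  move=> /boolp.choice [f Hf].
  exists (\matrix_(i, j) f (i, j), q) => /=; split.
  - move=> y hy; apply: sU.
    apply: (@le_ball _ _ _ (ratr q + ratr q)); first by rewrite [leRHS](splitr e) lerD // ltW.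
    apply: ball_triangle hy.
    by split => // i j; have := Hf (i, j); rewrite !mxE.
  - by split => // i j; apply: ball_sym; have := Hf (i, j); rewrite !mxE.
apply: meas_exists => -[Q e] /=.
case: (pselect (ball (map_mx ratr Q : V) (ratr e) `<=` U)) => H.
- set S := (fun _ => _).
  suff -> : S = hsub @^-1` ball (map_mx ratr Q : V) (ratr e) by exact: mball.
  by apply/seteqP; split => z; rewrite /S /=; [case|].
- set S := (fun _ => _).
  suff -> : S = set0 by [].
  by apply/seteqP; split => z // [].
Qed.

End Meas.

Lemma mine_EFin (R : realType) (a b : R) : mine a%:E b%:E = (Num.min a b)%:E.
Proof. by rewrite /Order.min lte_fin; case: ifP. Qed.

Section Norm.
Variables (R : realType) (d : nat) (N : matrix R 1 d -> R).
Hypothesis hN : is_norm N.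
Local Notation V := (matrix R 1 d).
Local Notation T := (Rd R d).

Lemma N0 : N 0 = 0.
Proof. case: hN => _ hZ _; by rewrite -(scale0r (0 : V)) hZ normr0 mul0r. Qed.

Lemma NN x : N (- x) = N x.
Proof. case: hN => _ hZ _; by rewrite -scaleN1r hZ normrN normr1 mul1r. Qed.

Lemma Ntri x y : N (x + y) <= N x + N y.
Proof. by case: hN. Qed.

Lemma Nge0 x : 0 <= N x.
Proof. have := Ntri x (- x); rewrite subrr N0 NN; lra. Qed.

Lemma Nsym x y : N (x - y) = N (y - x).
Proof. by rewrite -NN opprB. Qed.

Lemma Nrev x y : `|N x - N y| <= N (x - y).
Proof.
rewrite ler_norml; apply/andP; split.
- have h := Ntri (y - x) x; rewrite subrK in h; have := Nsym x y; lra.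
- have h := Ntri (x - y) y; rewrite subrK in h; lra.
Qed.

Lemma Nsum (I : Type) (s : seq I) (F : I -> V) :
  N (\sum_(i <- s) F i) <= \sum_(i <- s) N (F i).
Proof.
elim: s => [|i s IH]; first by rewrite !big_nil N0.
by rewrite !big_cons; apply: le_trans (Ntri _ _) _; rewrite lerD2l.
Qed.

Lemma Nbound (v : V) : N v <= \sum_(j < d) `|v ord0 j| * N (delta_mx ord0 j).
Proof.
rewrite {1}(matrix_sum_delta v) big_ord1.
apply: le_trans (Nsum _ _) _.
by apply: ler_sum => j _; case: hN => _ hZ _; rewrite hZ.
Qed.

Lemma lip_cont (f : V -> R) : (forall x y, `|f x - f y| <= N (x - y)) ->
  continuous f.
Proof.
move=> Hf.
set C := \sum_(j < d) N (delta_mx ord0 j).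
have C0 : 0 <= C by apply: sumr_ge0 => j _; exact: Nge0.
have C1 : 0 < C + 1 by lra.
move=> x A /nbhs_ballP [e /= e0 sA].
apply/nbhs_ballP; exists (e / (C + 1)); first by rewrite /= divr_gt0.
move=> y [_ bxy]; apply: sA; rewrite /ball /=.
apply: le_lt_trans (Hf x y) _.
apply: le_lt_trans (Nbound (x - y)) _.
apply: (@le_lt_trans _ _ (\sum_(j < d) e / (C + 1) * N (delta_mx ord0 j))).
  apply: ler_sum => j _; apply: ler_wpM2r; first exact: Nge0.
  by rewrite !mxE; have := bxy ord0 j; rewrite /ball /= => /ltW.
rewrite -mulr_sumr -/C mulrAC ltr_pdivrMr // mulrDr mulr1 ltrDl //.
Qed.

Lemma N_cont : continuous N.
Proof. exact: lip_cont Nrev. Qed.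

Lemma meas_Nshift (g : V) : measurable_fun [set: T] (fun x : T => N ((x : V) - g)).
Proof.
apply: (@cont_meas R d (fun x : V => N (x - g))); apply: lip_cont => x y.
suff -> : x - y = (x - g) - (y - g) by exact: Nrev.
by rewrite opprB addrA subrK.
Qed.

Lemma meas_Nh : measurable_fun [set: T * T] (fun z : T * T => N (@hsub R d z)).
Proof. exact: measurableT_comp (@cont_meas R d N N_cont) (@meas_hsub R d). Qed.

Lemma distG_cons g G x : distG N (g :: G) x = mine (N (x - g))%:E (distG N G x).
Proof. by rewrite /distG big_cons. Qed.

Lemma meas_distG (G : seq V) : measurable_fun [set: T] (distG N G).
Proof.
elim: G => [|g G IH].
  have -> : distG N [::] = cst +oo%E by apply/funext => x; rewrite /distG big_nil.
  exact: measurable_cst.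
have -> : distG N (g :: G) = fun x => mine (N (x - g))%:E (distG N G x).
  by apply/funext => x; rewrite distG_cons.
apply: measurable_mine; last exact: IH.
by apply/measurable_EFinP; exact: meas_Nshift.
Qed.

Lemma distG_fin g G x : distG N (g :: G) x = (fine (distG N (g :: G) x))%:E.
Proof.
elim: G g => [|h G IH] g; rewrite distG_cons.
  by rewrite /distG big_nil miney.
by rewrite IH mine_EFin.
Qed.

Lemma distG_rcons G xi x :
  distG N (rcons G xi) x = mine (distG N G x) (N (x - xi))%:E.
Proof.
elim: G => [|g G IH].
  by rewrite /= distG_cons /distG !big_nil miney minye.
by rewrite rcons_cons !distG_cons IH minA.
Qed.

Lemma distG_ge0 G x : (0 <= distG N G x)%E.
Proof.
elim: G => [|g G IH]; first by rewrite /distG big_nil.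
by rewrite distG_cons le_min lee_fin Nge0 IH.
Qed.

End Norm.

Lemma pow_sum (R : realType) (r : R) (u v : R) : 0 < r -> 0 <= u -> 0 <= v ->
  (u + v) `^ r <= 2 `^ r * (u `^ r + v `^ r).
Proof.
move=> r0 u0 v0.
have [vu|uv] := leP v u.
- have h1 : u + v <= 2 * u by lra.
  have h2 : 0 <= u + v by lra.
  have h3 : 0 <= 2 * u by lra.
  apply: (@le_trans _ _ ((2 * u) `^ r)).
    by apply: (@ge0_ler_powR R r (ltW r0)); rewrite ?nnegrE.
  rewrite powRM //.
  apply: ler_wpM2l; first exact: powR_ge0.
  by rewrite lerDl powR_ge0.
- have h1 : u + v <= 2 * v by lra.
  have h2 : 0 <= u + v by lra.
  have h3 : 0 <= 2 * v by lra.
  apply: (@le_trans _ _ ((2 * v) `^ r)).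
    by apply: (@ge0_ler_powR R r (ltW r0)); rewrite ?nnegrE.
  rewrite powRM //.
  apply: ler_wpM2l; first exact: powR_ge0.
  by rewrite lerDr powR_ge0.
Qed.

Lemma aux_c (R : realType) (c : R) : 0 < c -> c * 2 < 1 ->
  [/\ 0 < c + 1, 0 <= 1 - c, 1 - c <= c + 1 & c <= 1 - c].
Proof. by move=> *; split; lra. Qed.

Lemma aux_nra (R : realType) (u Q X m : R) : u <= 1 -> 0 <= X -> 0 <= Q ->
  m <= Q * X -> (u - Q) * X <= X - m.
Proof. move=> *; nra. Qed.

Section Main.
Variables (R : realType) (d : nat) (r : R) (N : matrix R 1 d -> R).
Variables (P : probability (Rd R d) R) (a : nat -> matrix R 1 d).
Hypotheses (r0 : 0 < r) (hN : is_norm N).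
Hypothesis hint : (\int[P]_x ((N x)%:E `^ r) < +oo)%E.
Hypothesis hg : greedy_seq N r P a.
Variables (nu : probability (Rd R d) R) (c : R) (m : nat).
Hypotheses (c0 : 0 < c) (c2 : c < 2^-1).
Local Notation V := (matrix R 1 d).
Local Notation T := (Rd R d).

Let G := pts a m.+1.
Let psi (x : T) := fine (distG N G x).
Let phi (x : T) := psi x `^ r.

Let dG x : distG N G x = (psi x)%:E.
Proof. by rewrite /psi /G /pts /=; exact: distG_fin. Qed.

Let mpsi : measurable_fun [set: T] psi.
Proof.
apply/measurable_EFinP.
have -> : EFin \o psi = distG N G by apply/funext => x; rewrite /= dG.
exact: (@meas_distG R d N hN G).
Qed.

Let psi_ge0 x : 0 <= psi x.
Proof. by have := @distG_ge0 R d N hN G x; rewrite dG lee_fin. Qed.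

Let psi_le x : psi x <= N (x - a 0%N).
Proof.
have : (distG N G x <= (N (x - a 0%N))%:E)%E.
  by rewrite /G /pts /= distG_cons ge_min lexx.
by rewrite dG lee_fin.
Qed.

Let mphi : measurable_fun [set: T] phi.
Proof. exact: measurableT_comp (@measurable_powR R r) mpsi. Qed.

Let phi_ge0 x : 0 <= phi x.
Proof. exact: powR_ge0. Qed.

Let intN : P.-integrable [set: T] (fun x => (N x `^ r)%:E).
Proof.
apply/integrableP; split.
  apply/measurable_EFinP.
  exact: measurableT_comp (@measurable_powR R r) (@cont_meas R d N (@N_cont R d N hN)).
under eq_integral do rewrite gee0_abs ?lee_fin ?powR_ge0 // -poweR_EFin.
exact: hint.
Qed.

Let int_phi : P.-integrable [set: T] (EFin \o phi).
Proof.
have ig := integrableZl measurableT (2 `^ r) (integrableD measurableT intN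
  (finite_measure_integrable_cst P (N (a 0%N) `^ r) measurableT)).
apply: (le_integrable measurableT _ _ ig).
- exact/measurable_EFinP.
- move=> x _ /=.
  rewrite lee_fin !ger0_norm ?phi_ge0 ?mulr_ge0 ?addr_ge0 ?powR_ge0 //.
  apply: le_trans (pow_sum r0 (Nge0 hN x) (Nge0 hN (a 0%N))).
  apply: (@ge0_ler_powR R r (ltW r0)); rewrite ?nnegrE ?psi_ge0 ?addr_ge0 ?Nge0 //.
  apply: le_trans (psi_le x) _.
  by have := Ntri hN x (- a 0%N); rewrite NN.
Qed.

Let mmin (xi : V) (x : T) := Num.min (psi x) (N (x - xi)) `^ r.

Let mmin_ge0 xi x : 0 <= mmin xi x.
Proof. exact: powR_ge0. Qed.

Let mmin_le xi x : mmin xi x <= phi x.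
Proof.
apply: (@ge0_ler_powR R r (ltW r0)); rewrite ?nnegrE ?le_min ?psi_ge0 ?Nge0 //.
by rewrite ge_min lexx.
Qed.

Let mmmin xi : measurable_fun [set: T] (mmin xi).
Proof.
apply: measurableT_comp (@measurable_powR R r) _.
apply: measurable_minr => //; exact: meas_Nshift hN xi.
Qed.

Let int_mmin xi : P.-integrable [set: T] (EFin \o mmin xi).
Proof.
apply: (le_integrable measurableT _ _ int_phi).
- exact/measurable_EFinP.
- move=> x _ /=; rewrite lee_fin !ger0_norm ?mmin_ge0 ?phi_ge0 //; exact: mmin_le.
Qed.

Let I0 := (\int[P]_x (phi x)%:E)%E.
Let Ix xi := (\int[P]_x (mmin xi x)%:E)%E.

Let errG : (err N r P G `^ r = I0)%E.
Proof.
rewrite /err -poweRrM mulVf ?gt_eqF // poweRe1; last first.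
  by apply: integral_ge0 => x _; exact: poweR_ge0.
by apply: eq_integral => x _; rewrite dG poweR_EFin.
Qed.

Let errGx xi : (err N r P (rcons G xi) `^ r = Ix xi)%E.
Proof.
rewrite /err -poweRrM mulVf ?gt_eqF // poweRe1; last first.
  by apply: integral_ge0 => x _; exact: poweR_ge0.
by apply: eq_integral => x _; rewrite distG_rcons dG mine_EFin poweR_EFin.
Qed.

Let pts_S : pts a m.+2 = rcons G (a m.+1).
Proof.
rewrite /G /pts (_ : m.+2 = m.+1 + 1)%N; last by rewrite addn1.
by rewrite iotaD map_cat cats1 add0n.
Qed.

Let Ix_ge xi : (Ix (a m.+1) <= Ix xi)%E.
Proof.
have h := hg m.+1 xi.
rewrite -!errGx.
by apply: (gt0_ler_poweR (ltW r0)) h; rewrite in_itv /= ?poweR_ge0 ?leey.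
Qed.

Let f (z : T * T) : \bar R := (phi z.1 - Num.min (psi z.1) (N (@hsub R d z)) `^ r)%:E.

Let mf : measurable_fun [set: T * T] f.
Proof.
apply/measurable_EFinP; apply: measurable_funB.
  exact: measurableT_comp mphi measurable_fst.
apply: measurableT_comp (@measurable_powR R r) _.
apply: measurable_minr; first exact: measurableT_comp mpsi measurable_fst.
exact: meas_Nh hN.
Qed.

Let f0 z : (0 <= f z)%E.
Proof. by rewrite lee_fin subr_ge0; exact: (mmin_le z.2 z.1). Qed.

Let inner xi : (\int[P]_x f (x, xi) = I0 - Ix xi)%E.
Proof.
by rewrite /I0 /Ix -integralB_EFin.
Qed.

Let outer : (\int[nu]_xi \int[P]_x f (x, xi) <= I0 - Ix (a m.+1))%E.
Proof.
apply: (@le_trans _ _ (\int[nu]_xi (cst (I0 - Ix (a m.+1)) xi))%E).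
  apply: ge0_le_integral => //.
  - by move=> xi _; apply: integral_ge0 => x _; exact: f0.
  - exact: (measurable_fun_fubini_tonelli_G (m1 := P) f mf f0).
  - by move=> xi _; rewrite inner /=; apply: leeB => //; exact: Ix_ge.
by rewrite integral_cst // -[X in (_ * X <= _)%E]/(nu [set: T]) probability_setT mule1.
Qed.

Let t (x : T) := c / (c + 1) * psi x.
Let A := [set z : T * T | N (@hsub R d z) <= t z.1].

Let mA : measurable A.
Proof.
have mg : measurable_fun [set: T * T] (fun z : T * T => N (@hsub R d z) - t z.1).
  apply: measurable_funB; first exact: meas_Nh hN.
  apply: measurable_funM; first exact: measurable_cst.
  exact: measurableT_comp mpsi measurable_fst.
have := mg measurableT `]-oo, 0]%classic (measurable_itv _).
rewrite setTI (_ : _ @^-1` _ = A) //.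
by apply/seteqP; split => z; rewrite /= in_itv /= subr_le0.
Qed.

Let xsA x : xsection A x = Nball N x (t x).
Proof.
by apply/seteqP; split => y; rewrite /xsection /Nball /= inE /A /= /hsub /= (Nsym hN x y).
Qed.

Let mh : measurable_fun [set: T] (fun x => nu (Nball N x (t x)) * (phi x)%:E)%E.
Proof.
apply: emeasurable_funM; last exact/measurable_EFinP.
have := measurable_fun_xsection nu mA.
by rewrite (_ : nu \o xsection A = fun x => nu (Nball N x (t x))) //; apply/funext => x /=; rewrite xsA.
Qed.

Let K := (powR (1 - c) r - powR c r) / powR (c + 1) r.

Let c2' : c * 2 < 1.
Proof. by rewrite -ltr_pdivlMr // div1r. Qed.

Let K_ge0 : 0 <= K.
Proof.
have h1 : 0 <= c by apply: ltW.
have [h3 _ _ h2] := aux_c c0 c2'.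
apply: divr_ge0; last exact: powR_ge0.
rewrite subr_ge0; apply: (@ge0_ler_powR R r (ltW r0)); rewrite ?nnegrE //.
by apply: le_trans h2.
Qed.

Let key x y : N (y - x) <= t x -> K * phi x <= phi x - mmin y x.
Proof.
move=> hy.
have p0 := psi_ge0 x.
have [cc h1c h1c' _] := aux_c c0 c2'.
have q0 : 0 <= c / (c + 1) by rewrite divr_ge0 // ltW.
have hm : mmin y x <= (c / (c + 1) * psi x) `^ r.
  apply: (@ge0_ler_powR R r (ltW r0)); rewrite ?nnegrE ?le_min ?psi_ge0 ?Nge0 //.
    exact: mulr_ge0.
  by rewrite ge_min; apply/orP; right; rewrite (Nsym hN).
rewrite powRM // in hm.
set Q := (c / (c + 1)) `^ r in hm.
have hq : Q * (c + 1) `^ r = c `^ r.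
  by rewrite /Q -powRM ?divfK ?gt_eqF // ltW.
have hA : (1 - c) `^ r <= (c + 1) `^ r.
  by apply: (@ge0_ler_powR R r (ltW r0)); rewrite ?nnegrE // ltW.
have hD : 0 < (c + 1) `^ r by apply: powR_gt0.
have hQ : 0 <= Q by apply: powR_ge0.
rewrite /K -hq mulrBl mulfK ?gt_eqF //.
set u := (1 - c) `^ r / (c + 1) `^ r.
have hu : u <= 1 by rewrite /u ler_pdivrMr // mul1r.
have hX : 0 <= phi x by apply: phi_ge0.
rewrite /phi in hX *.
exact: aux_nra.
Qed.

Let inner_lb x : (K%:E * (nu (Nball N x (t x)) * (phi x)%:E) <= \int[nu]_y f (x, y))%E.
Proof.
have mB : measurable (Nball N x (t x) : set T) by rewrite -xsA; exact: measurable_xsection.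
have mfx : measurable_fun [set: T] (fun y => f (x, y)) by exact: measurable_fun_pair2 mf.
apply: (@le_trans _ _ (\int[nu]_(y in Nball N x (t x)) f (x, y))%E); last first.
  by apply: ge0_subset_integral => //.
apply: (@le_trans _ _ (\int[nu]_(y in Nball N x (t x)) (cst (K * phi x)%:E y))%E); last first.
  apply: ge0_le_integral => //.
  - by move=> y _; rewrite lee_fin mulr_ge0.
  - exact: measurable_funS measurableT (subsetT _) mfx.
  - by move=> y hy; rewrite lee_fin; apply: key.
rewrite integral_cst //.
set B := nu _.
have -> : ((K * phi x)%:E * B = K%:E * (B * (phi x)%:E))%E.
  by rewrite EFinM muleAC -muleA.
by [].
Qed.

Lemma main_aux :
  (err N r P (pts a m.+1) `^ r - err N r P (pts a m.+2) `^ r >=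
     ((powR (1 - c) r - powR c r) / powR (c + 1) r)%:E *
     \int[P]_x (nu (Nball N x (c / (c + 1) * fine (distG N (pts a m.+1) x)))
                * distG N (pts a m.+1) x `^ r))%E.
Proof.
rewrite pts_S -/G errG errGx.
have -> : (\int[P]_x (nu (Nball N x (c / (c + 1) * fine (distG N G x)))
                * distG N G x `^ r) =
          \int[P]_x (nu (Nball N x (t x)) * (phi x)%:E))%E.
  by apply: eq_integral => x _; rewrite /t dG poweR_EFin.
rewrite -/K -ge0_integralZl //; last first.
- by move=> x _; rewrite mule_ge0 // lee_fin phi_ge0.
apply: (@le_trans _ _ (\int[P]_x \int[nu]_y f (x, y))%E).
  apply: ge0_le_integral => //.
  - by move=> x _; rewrite mule_ge0 // ?lee_fin // mule_ge0 // lee_fin phi_ge0.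
  - by apply: emeasurable_funM => //; exact: measurable_cst.
  - exact: (measurable_fun_fubini_tonelli_F (m2 := nu) f mf f0).
rewrite (fubini_tonelli f mf f0).
exact: outer.
Qed.

End Main.

Unset Implicit Arguments.
Unset Strict Implicit.

Theorem proposition2p1 (R : realType) (d : nat) (r : R)
  (N : (matrix R 1 d) -> R) (P : probability (Rd R d) R) (a : nat -> (matrix R 1 d)) :
  (1 <= d)%N -> 0 < r -> is_norm N ->
  (\int[P]_x ((N x)%:E `^ r) < +oo)%E ->
  greedy_seq N r P a ->
  forall (nu : probability (Rd R d) R) (c : R), 0 < c < 2^-1 ->
  forall n : nat, (1 <= n)%N ->
  (err N r P (pts a n) `^ r - err N r P (pts a n.+1) `^ r >=
     ((powR (1 - c) r - powR c r) / powR (c + 1) r)%:E *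
     \int[P]_x (nu (Nball N x (c / (c + 1) * fine (distG N (pts a n) x)))
                * distG N (pts a n) x `^ r))%E.
Proof.
move=> _ r0 hN hint hg nu c /andP[c0 c2] [//|m] _.
exact: (main_aux r0 hN hint hg nu m c0 c2).
Qed.
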